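(* Let $a_1,\dots,a_s$ be nonnegative integers. Then for arbitrary integers $k_1,\dots,k_s$ with $1\le k_i\le a_1+\cdots+a_s-1$ for all $i$, either $1\le k_i\le a_i-1$ for some $i$, or $1-a_j\le k_i-k_j\le a_i-1$ for some $i<j$. *)

(* Defs.v *)
From Stdlib Require Import ZArith List.
Open Scope Z_scope.

(* sumZ a s = a 0 + a 1 + ... + a (s-1)  (indices 0..s-1 stand for 1..s) *)
Fixpoint sumZ (a : nat -> Z) (s : nat) : Z :=
  match s with
  | O => 0
  | S n => sumZ a n + a n
  end.

(* Main.v *)
Require Import Defs.
From Stdlib Require Import ZArith Lia Classical Bool.
Open Scope Z_scope.

Fixpoint sP (a : nat -> Z) (P : nat -> bool) (n : nat) : Z :=
  match n with O => 0 | S n => sP a P n + (if P n then a n else 0) end.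

Fixpoint cnt (P : nat -> bool) (n : nat) : nat :=
  match n with O => O | S n => (cnt P n + (if P n then 1 else 0))%nat end.

Definition rm (P : nat -> bool) (m : nat) := fun i => andb (P i) (negb (Nat.eqb i m)).

Lemma sP_rm a P m n : (m < n)%nat -> P m = true -> sP a P n = sP a (rm P m) n + a m.
Proof.
  induction n as [|n IH]; intros Hm Pm; [lia|]. simpl. unfold rm at 2.
  destruct (Nat.eq_dec m n) as [->|Hne].
  - rewrite Pm, Nat.eqb_refl. simpl.
    assert (E: forall n0, (n0 <= n)%nat -> sP a (rm P n) n0 = sP a P n0).
    { induction n0; intros; simpl; [auto|]. rewrite IHn0 by lia. unfold rm.
      destruct (Nat.eqb_spec n0 n); [lia|]. destruct (P n0); simpl; lia. }
    rewrite E by lia. lia.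
  - rewrite IH by (auto; lia). destruct (Nat.eqb_spec n m); [lia|].
    destruct (P n); simpl; lia.
Qed.

Lemma cnt_rm P m n : (m < n)%nat -> P m = true -> cnt P n = S (cnt (rm P m) n).
Proof.
  induction n as [|n IH]; intros Hm Pm; [lia|]. simpl. unfold rm at 2.
  destruct (Nat.eq_dec m n) as [->|Hne].
  - rewrite Pm, Nat.eqb_refl. simpl.
    assert (E: forall n0, (n0 <= n)%nat -> cnt (rm P n) n0 = cnt P n0).
    { induction n0; intros; simpl; [auto|]. rewrite IHn0 by lia. unfold rm.
      destruct (Nat.eqb_spec n0 n); [lia|]. destruct (P n0); simpl; lia. }
    rewrite E by lia. lia.
  - rewrite IH by (auto; lia). destruct (Nat.eqb_spec n m); [lia|].
    destruct (P n); simpl; lia.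
Qed.

Lemma cnt_ex P n : (0 < cnt P n)%nat -> exists i, (i < n)%nat /\ P i = true.
Proof.
  induction n; simpl; intros H; [lia|].
  destruct (P n) eqn:E; [exists n; split; auto|].
  destruct IHn as [i [? ?]]; [lia|]. exists i; split; auto.
Qed.

Lemma argmax (k : nat -> Z) P n : (exists i, (i < n)%nat /\ P i = true) ->
  exists m, (m < n)%nat /\ P m = true /\ forall i, (i < n)%nat -> P i = true -> k i <= k m.
Proof.
  induction n; intros [i [Hi Pi]]; [lia|].
  destruct (classic (exists i, (i < n)%nat /\ P i = true)) as [H|H].
  - destruct (IHn H) as [m [Hm [Pm Hmax]]].
    destruct (P n) eqn:Pn.
    + destruct (Z_le_gt_dec (k n) (k m)).
      * exists m; repeat split; auto. intros j Hj Pj.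
        destruct (Nat.eq_dec j n); [subst; auto|]. apply Hmax; auto; lia.
      * exists n; repeat split; auto. intros j Hj Pj.
        destruct (Nat.eq_dec j n); [subst; lia|]. specialize (Hmax j ltac:(lia) Pj). lia.
    + exists m; repeat split; auto. intros j Hj Pj.
      destruct (Nat.eq_dec j n); [subst; congruence|]. apply Hmax; auto; lia.
  - exists n; repeat split; auto.
    + destruct (Nat.eq_dec i n); [subst; auto|]. exfalso; apply H; exists i; split; auto; lia.
    + intros j Hj Pj. destruct (Nat.eq_dec j n); [subst; lia|].
      exfalso; apply H; exists j; split; auto; lia.
Qed.

Lemma cnt_mono P n m : (m <= n)%nat -> (cnt P m <= cnt P n)%nat.
Proof. induction 1; simpl; lia. Qed.

Lemma key (a k : nat -> Z) n : forall c P B, cnt P n = c -> 0 <= B ->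
  (forall i, (i < n)%nat -> P i = true -> 0 < a i /\ a i <= k i /\ k i <= B) ->
  (forall i j, (i < n)%nat -> (j < n)%nat -> P i = true -> P j = true -> i <> j ->
     k j <= k i - a i \/ k i <= k j - a j) ->
  sP a P n <= B.
Proof.
  induction c; intros P B Hc HB H1 H2.
  - assert (E: forall n0, (n0 <= n)%nat -> sP a P n0 = 0).
    { induction n0; intros Hle; simpl; auto. rewrite IHn0 by lia.
      destruct (P n0) eqn:E; auto. assert (Hpos: (cnt P (S n0) > 0)%nat) by (simpl; rewrite E; lia).
      assert (Hmono: forall m, (m <= n)%nat -> (cnt P m <= cnt P n)%nat).
      { intros m Hm. apply cnt_mono; auto. }
      specialize (Hmono (S n0) Hle). lia. }
    rewrite E by lia. lia.
  - destruct (argmax k P n) as [m [Hm [Pm Hmax]]]. apply cnt_ex; lia.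
    rewrite (sP_rm a P m n Hm Pm).
    destruct (H1 m Hm Pm) as [? [? ?]].
    assert (sP a (rm P m) n <= k m - a m).
    { apply IHc.
      - rewrite (cnt_rm P m n Hm Pm) in Hc. lia.
      - lia.
      - intros i Hi Pi. unfold rm in Pi. apply andb_prop in Pi as [Pi Ni].
        destruct (Nat.eqb_spec i m); [discriminate|].
        destruct (H1 i Hi Pi) as [? [? ?]]. repeat split; auto.
        specialize (Hmax i Hi Pi). destruct (H2 i m Hi Hm Pi Pm n0); lia.
      - intros i j Hi Hj Pi Pj Hij. unfold rm in Pi, Pj.
        apply andb_prop in Pi as [Pi _]. apply andb_prop in Pj as [Pj _]. auto. }
    lia.
Qed.

Lemma sP_all (a : nat -> Z) n : (forall i, (i < n)%nat -> 0 <= a i) ->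
  sP a (fun i => 0 <? a i) n = sumZ a n.
Proof.
  induction n; intros H; simpl; auto. rewrite IHn by (intros; apply H; lia).
  destruct (Z.ltb_spec 0 (a n)); auto. assert (0 <= a n) by (apply H; lia).
  replace (a n) with 0 at 2 by lia. lia.
Qed.

Theorem mainTheorem6 (s : nat) (a k : nat -> Z) (hs : (1 <= s)%nat)
  (ha : forall i : nat, (i < s)%nat -> 0 <= a i)
  (hk : forall i : nat, (i < s)%nat -> 1 <= k i <= sumZ a s - 1) :
  (exists i : nat, (i < s)%nat /\ 1 <= k i <= a i - 1) \/
  (exists i j : nat, (i < j)%nat /\ (j < s)%nat /\
     1 - a j <= k i - k j <= a i - 1).
Proof.
  apply NNPP. intros Hn.
  assert (A1: forall i, (i < s)%nat -> a i <= k i).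
  { intros i Hi. destruct (Z_le_gt_dec (a i) (k i)); auto.
    exfalso; apply Hn; left; exists i; specialize (hk i Hi); split; auto; lia. }
  assert (A2: forall i j, (i < s)%nat -> (j < s)%nat -> i <> j ->
     k j <= k i - a i \/ k i <= k j - a j).
  { assert (forall i j, (i < j)%nat -> (j < s)%nat ->
       k j <= k i - a i \/ k i <= k j - a j).
    { intros i j Hij Hj. destruct (Z_le_gt_dec (1 - a j) (k i - k j)).
      - destruct (Z_le_gt_dec (k i - k j) (a i - 1)).
        + exfalso; apply Hn; right; exists i, j; repeat split; auto.
        + left; lia.
      - right; lia. }
    intros i j Hi Hj Hij. destruct (Nat.lt_total i j) as [|[|]]; [|lia|].
    - apply H; auto.
    - destruct (H j i); auto; lia. }
  assert (sP a (fun i => 0 <? a i) s <= sumZ a s - 1).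
  { eapply key; [reflexivity| |intros i Hi Pi|intros; apply A2; auto].
    - specialize (hk 0%nat ltac:(lia)). lia.
    - apply Z.ltb_lt in Pi. specialize (A1 i Hi). specialize (hk i Hi). lia. }
  rewrite sP_all in H by auto. lia.
Qed.
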